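(* Let $R$ be a ring and $I$ a regular ideal of $R$ such that idempotents lift modulo $I$. Then $R$ is weakly $r$-clean if and only if $R/I$ is weakly $r$-clean.
   Context: Rings are associative with identity. $Idem(R)$ denotes the idempotents and $Reg(R)=\{r\in R: r=ryr \text{ for some } y\in R\}$ the (von Neumann) regular elements. An ideal $I$ is regular if every element of $I$ is a regular element. Idempotents lift modulo $I$ if for every $x\in R$ with $x^2-x\in I$ there is $e\in Idem(R)$ with $e-x\in I$. An element $x$ is weakly $r$-clean if $x=r+e$ or $x=r-e$ for some $r\in Reg(R)$, $e\in Idem(R)$; a ring is weakly $r$-clean if all its elements are. *)

(* Defs.v *)
(* Rings are associative with identity (pzRingType: the zero
   ring is allowed, so that R/R makes sense); not necessarily commutative. *)
From HB Require Import structures.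
From mathcomp Require Import all_boot all_algebra generic_quotient.
Set Implicit Arguments.
Unset Strict Implicit.
Unset Printing Implicit Defensive.
Import GRing.Theory.
Local Open Scope ring_scope.
Local Open Scope quotient_scope.

Definition idempotent_el (R : pzRingType) (e : R) : Prop := e * e = e.
Definition regular_el (R : pzRingType) (r : R) : Prop := exists y : R, r = r * y * r.

Definition weakly_rclean_el (R : pzRingType) (x : R) : Prop :=
  exists r e : R, regular_el r /\ idempotent_el e /\ (x = r + e \/ x = r - e).
Definition weakly_rclean (R : pzRingType) : Prop :=
  forall x : R, weakly_rclean_el x.

Definition two_sided_ideal (R : pzRingType) (I : {pred R}) : Prop :=
  [/\ 0 \in I,
      (forall x y, x \in I -> y \in I -> x - y \in I),
      (forall r x, x \in I -> r * x \in I) &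
      (forall r x, x \in I -> x * r \in I)].

Definition regular_ideal (R : pzRingType) (I : {pred R}) : Prop :=
  forall x, x \in I -> regular_el x.

Definition idempotents_lift (R : pzRingType) (I : {pred R}) : Prop :=
  forall x : R, x * x - x \in I -> exists e : R, idempotent_el e /\ e - x \in I.

Section Quotient.
Variables (R : pzRingType) (I : {pred R}) (HI : two_sided_ideal I).

Definition eqI (x y : R) : bool := x - y \in I.

Lemma I0 : 0 \in I. Proof. by case: HI. Qed.
Lemma IB x y : x \in I -> y \in I -> x - y \in I. Proof. by case: HI => _ H _ _; apply: H. Qed.
Lemma IN x : x \in I -> - x \in I.
Proof. by move=> Hx; rewrite -sub0r; apply: IB => //; apply: I0. Qed.
Lemma ID x y : x \in I -> y \in I -> x + y \in I.
Proof. by move=> Hx Hy; rewrite -[y]opprK; apply: IB => //; apply: IN. Qed.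
Lemma IMl r x : x \in I -> r * x \in I. Proof. by case: HI => _ _ H _; apply: H. Qed.
Lemma IMr r x : x \in I -> x * r \in I. Proof. by case: HI => _ _ _ H; apply: H. Qed.

Lemma eqI_refl : reflexive eqI. Proof. by move=> x; rewrite /eqI subrr I0. Qed.
Lemma eqI_sym : symmetric eqI.
Proof.
by move=> x y; apply/idP/idP => H; rewrite /eqI -opprB; apply: IN.
Qed.
Lemma eqI_trans : transitive eqI.
Proof.
move=> y x z Hxy Hyz; rewrite /eqI -(subrKA y); rewrite addrC.
by apply: ID.
Qed.

Canonical eqI_equiv := EquivRel eqI eqI_refl eqI_sym eqI_trans.

Definition quot := {eq_quot eqI}.
HB.instance Definition _ := Choice.on quot.



Definition q_zero : quot := \pi_quot 0.
Definition q_one : quot := \pi_quot 1.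
Definition q_opp (a : quot) : quot := \pi_quot (- repr a).
Definition q_add (a b : quot) : quot := \pi_quot (repr a + repr b).
Definition q_mul (a b : quot) : quot := \pi_quot (repr a * repr b).

Lemma piP x y : reflect (\pi_quot x = \pi_quot y) (eqI x y).
Proof. exact: (@eqmodP _ eqI_equiv x y). Qed.

Lemma repr_pi x : eqI (repr (\pi_quot x)) x.
Proof. by apply/piP; rewrite reprK. Qed.

Lemma repr_pi' x : x - repr (\pi_quot x) \in I.
Proof. by rewrite -/(eqI _ _) eqI_sym; apply: repr_pi. Qed.

Lemma pi_opp x : \pi_quot (- x) = q_opp (\pi x).
Proof.
rewrite /q_opp; apply/piP; rewrite /eqI opprK addrC.
exact: repr_pi.
Qed.

Lemma pi_add x y : \pi_quot (x + y) = q_add (\pi x) (\pi y).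
Proof.
rewrite /q_add; apply/piP; rewrite /eqI opprD addrACA.
by apply: ID; apply: repr_pi'.
Qed.

Lemma pi_mul x y : \pi_quot (x * y) = q_mul (\pi x) (\pi y).
Proof.
rewrite /q_mul; apply/piP; rewrite /eqI.
have -> : x * y - repr (\pi_quot x) * repr (\pi_quot y)
    = (x - repr (\pi_quot x)) * y + repr (\pi_quot x) * (y - repr (\pi_quot y)).
  by rewrite mulrBl mulrBr addrA subrK.
apply: ID; first exact/IMr/repr_pi'.
exact/IMl/repr_pi'.
Qed.

Lemma addqE x y : q_add (\pi_quot x) (\pi_quot y) = \pi_quot (x + y).
Proof. by rewrite pi_add. Qed.
Lemma oppqE x : q_opp (\pi_quot x) = \pi_quot (- x).
Proof. by rewrite pi_opp. Qed.
Lemma mulqE x y : q_mul (\pi_quot x) (\pi_quot y) = \pi_quot (x * y).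
Proof. by rewrite pi_mul. Qed.

Lemma q_addA : associative q_add.
Proof.
by elim/(@quotW _ quot)=> x; elim/(@quotW _ quot)=> y; elim/(@quotW _ quot)=> z; rewrite !addqE addrA.
Qed.
Lemma q_addC : commutative q_add.
Proof. by elim/(@quotW _ quot)=> x; elim/(@quotW _ quot)=> y; rewrite !addqE addrC. Qed.
Lemma q_add0 : left_id q_zero q_add.
Proof. by elim/(@quotW _ quot)=> x; rewrite /q_zero addqE add0r. Qed.
Lemma q_addN : left_inverse q_zero q_opp q_add.
Proof. by elim/(@quotW _ quot)=> x; rewrite oppqE addqE addNr. Qed.

HB.instance Definition _ := GRing.isZmodule.Build quot q_addA q_addC q_add0 q_addN.

Lemma q_addE (a b : quot) : a + b = q_add a b. Proof. by []. Qed.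

Lemma q_mulA : associative q_mul.
Proof.
by elim/(@quotW _ quot)=> x; elim/(@quotW _ quot)=> y; elim/(@quotW _ quot)=> z; rewrite !mulqE mulrA.
Qed.
Lemma q_mul1 : left_id q_one q_mul.
Proof. by elim/(@quotW _ quot)=> x; rewrite /q_one mulqE mul1r. Qed.
Lemma q_mulr1 : right_id q_one q_mul.
Proof. by elim/(@quotW _ quot)=> x; rewrite /q_one mulqE mulr1. Qed.
Lemma q_mulDl : left_distributive q_mul (@GRing.add quot).
Proof.
elim/(@quotW _ quot)=> x; elim/(@quotW _ quot)=> y; elim/(@quotW _ quot)=> z.
by rewrite !q_addE [in LHS]addqE !mulqE addqE mulrDl.
Qed.
Lemma q_mulDr : right_distributive q_mul (@GRing.add quot).
Proof.
elim/(@quotW _ quot)=> x; elim/(@quotW _ quot)=> y; elim/(@quotW _ quot)=> z.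
by rewrite !q_addE [in LHS]addqE !mulqE addqE mulrDr.
Qed.

HB.instance Definition _ := GRing.Zmodule_isPzRing.Build quot
  q_mulA q_mul1 q_mulr1 q_mulDl q_mulDr.

End Quotient.

(* Main.v *)
Require Import Defs.
From mathcomp Require Import all_boot all_algebra.
From mathcomp Require Import generic_quotient.
Import GRing.Theory.
Local Open Scope ring_scope.
Local Open Scope quotient_scope.

Section Aux.
Variables (R : pzRingType) (I : {pred R}) (HI : two_sided_ideal I).
Local Notation pi x := ((\pi_(quot HI) x : quot HI) : quot HI).

Lemma piD x y : pi (x + y) = pi x + pi y.
Proof. by rewrite Defs.pi_add. Qed.
Lemma piM x y : pi (x * y) = pi x * pi y.
Proof. by rewrite Defs.pi_mul. Qed.
Lemma piN x : pi (- x) = - pi x.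
Proof. by rewrite Defs.pi_opp. Qed.
Lemma piB x y : pi (x - y) = pi x - pi y.
Proof. by rewrite piD piN. Qed.
Lemma pi0 x : (pi x = 0) <-> x \in I.
Proof.
split=> [H|H].
  have := (Defs.piP HI x 0); rewrite /eqI subr0 => P.
  by apply/P.
by apply/(Defs.piP HI x 0); rewrite /eqI subr0.
Qed.

Lemma reg_lift (s : R) : regular_ideal I -> regular_el (pi s) -> regular_el s.
Proof.
move=> HR [y Hy].
set y' := repr y.
have Hy' : pi y' = y by rewrite /y' reprK.
have Ha : s - s * y' * s \in I.
  by apply/pi0; rewrite piB !piM Hy' -Hy subrr.
have [z Hz] := HR _ Ha.
exists (y' + (1 - y' * s) * z * (1 - s * y')).
have E1 : s * (1 - y' * s) = s - s * y' * s by rewrite mulrBr mulr1 mulrA.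
have E2 : (1 - s * y') * s = s - s * y' * s by rewrite mulrBl mul1r.
rewrite mulrDr mulrDl.
have -> : s * ((1 - y' * s) * z * (1 - s * y')) * s
   = (s * (1 - y' * s)) * z * ((1 - s * y') * s) by rewrite !mulrA.
by rewrite E1 E2 -Hz addrC subrK.
Qed.

End Aux.

Theorem theorem2p15 (R : pzRingType) (I : {pred R}) (HI : two_sided_ideal I) :
  regular_ideal I -> idempotents_lift I ->
  (weakly_rclean R <-> weakly_rclean (quot HI)).
Proof.
move=> HR HL; split=> W.
  move=> q; have [r [e [[y Hy] [He Hx]]]] := W (repr q).
  exists ((\pi_(quot HI) r : quot HI)), ((\pi_(quot HI) e : quot HI)); split; last split.
  - by exists ((\pi_(quot HI) y : quot HI)); rewrite {1}Hy !piM.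
  - by rewrite /idempotent_el -piM He.
  - by rewrite -[q]reprK; case: Hx => ->; [left; rewrite piD | right; rewrite piB].
move=> x; have [r0 [e0 [Hr0 [He0 Hx]]]] := W ((\pi_(quot HI) x : quot HI)).
set e1 := repr e0.
have He1 : (\pi_(quot HI) e1 : quot HI) = e0 by rewrite /e1 reprK.
have [e [He Hee]] : exists e : R, idempotent_el e /\ e - e1 \in I.
  apply: HL; apply/pi0; rewrite piB piM He1 He0 subrr //.
have Hpe : (\pi_(quot HI) e : quot HI) = e0.
  by apply/eqP; rewrite -subr_eq0 -He1 -piB; apply/eqP/pi0.
case: Hx => Hx.
  exists (x - e), e; split; last split => //.
    by apply: (@reg_lift R I HI _ HR); rewrite piB Hpe Hx addrK.
  by left; rewrite subrK.
exists (x + e), e; split; last split => //.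
  by apply: (@reg_lift R I HI _ HR); rewrite piD Hpe Hx subrK.
by right; rewrite addrK.
Qed.
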